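(* Let $n\ge2$, $A\in\mathbb{R}^{n\times d}$ with every row satisfying $\|A_{(i,:)}\|_2\le1$, $\mathcal{B}_d=\{\mathbf{w}\in\mathbb{R}^d:\|\mathbf{w}\|_2\le1\}$, $\alpha_t=1$, $g(\mathbf{w},\mathbf{p})=\mathbf{p}^{\top}A\mathbf{w}$, $h_t(\mathbf{w})=-g(\mathbf{w},\mathbf{p}_t)$, $\ell_t(\mathbf{p})=g(\mathbf{w}_t,\mathbf{p})$. Let $\widehat{\mathbf{w}}_0=\mathbf{0}$, $\widehat{\mathbf{p}}_0=\tfrac{\mathbf{1}}{n}$ and for $t=1,\dots,T$: $\mathbf{w}_t=\arg\min_{\mathbf{w}\in\mathcal{B}_d}\frac{1}{\sqrt{\log n}}\langle-A^{\top}\widehat{\mathbf{p}}_{t-1},\mathbf{w}\rangle+\frac12\|\mathbf{w}-\widehat{\mathbf{w}}_{t-1}\|_2^2$, $\mathbf{p}_t=\arg\min_{\mathbf{p}\in\Delta^n}\sqrt{\log n}\langle A\widehat{\mathbf{w}}_{t-1},\mathbf{p}\rangle+D_E(\mathbf{p},\widehat{\mathbf{p}}_{t-1})$, $\widehat{\mathbf{w}}_t=\arg\min_{\mathbf{w}\in\mathcal{B}_d}\frac{1}{\sqrt{\log n}}\langle-A^{\top}\mathbf{p}_t,\mathbf{w}\rangle+\frac12\|\mathbf{w}-\widehat{\mathbf{w}}_{t-1}\|_2^2$, $\widehat{\mathbf{p}}_t=\arg\min_{\mathbf{p}\in\Delta^n}\sqrt{\log n}\langle A\mathbf{w}_t,\mathbf{p}\rangle+D_E(\mathbf{p},\widehat{\mathbf{p}}_{t-1})$.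 Define $R^{\mathbf{w}}=\sum_{t=1}^Th_t(\mathbf{w}_t)-\min_{\mathbf{w}\in\mathcal{B}_d}\sum_{t=1}^Th_t(\mathbf{w})$ and $R^{\mathbf{p}}=\sum_{t=1}^T\ell_t(\mathbf{p}_t)-\min_{\mathbf{p}\in\Delta^n}\sum_{t=1}^T\ell_t(\mathbf{p})$. Then $R^{\mathbf{p}}+R^{\mathbf{w}}=O(\sqrt{\log n})$, i.e. there is a universal constant $C$ such that $R^{\mathbf{p}}+R^{\mathbf{w}}\le C\sqrt{\log n}$ for all $T$.
   Context: $\Delta^n$ is the probability simplex; $\mathbf{1}$ the all-ones vector; $D_E(\mathbf{p},\mathbf{q})=\sum_ip_i\log(p_i/q_i)$ (KL divergence). *)

(* Defs.v *)
From mathcomp Require Import all_boot all_order all_algebra.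
From mathcomp Require Import all_classical all_reals all_analysis.
Set Implicit Arguments. Unset Strict Implicit. Unset Printing Implicit Defensive.
Import Order.TTheory GRing.Theory Num.Theory.
Local Open Scope ring_scope.
Local Open Scope classical_set_scope.

Section Defs.
Variable R : realType.

Definition dotv {k : nat} (u v : 'cV[R]_k) : R := \sum_(i < k) u i 0 * v i 0.

Definition l2norm {m k : nat} (M : 'M[R]_(m, k)) : R :=
  Num.sqrt (\sum_(i < m) \sum_(j < k) M i j ^+ 2).

Definition ball2 (d : nat) : set 'cV[R]_d := [set w | l2norm w <= 1].

Definition simplex (n : nat) : set 'cV[R]_n :=
  [set p | (forall i, 0 <= p i 0) /\ \sum_(i < n) p i 0 = 1].

Definition KL {n : nat} (p q : 'cV[R]_n) : R :=
  \sum_(i < n) p i 0 * ln (p i 0 / q i 0).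

Arguments ball2 : clear implicits.
Arguments simplex : clear implicits.

Definition is_argmin {T : Type} (S : set T) (f : T -> R) (x : T) : Prop :=
  S x /\ forall y, S y -> f x <= f y.

Definition gpay {n d : nat} (A : 'M[R]_(n, d)) (w : 'cV[R]_d) (p : 'cV[R]_n) : R :=
  dotv p (A *m w).

Definition regret_w {n d : nat} (A : 'M[R]_(n, d)) (w : nat -> 'cV[R]_d)
  (p : nat -> 'cV[R]_n) (T : nat) : R :=
  \sum_(1 <= t < T.+1) (- gpay A (w t) (p t))
  - inf [set (\sum_(1 <= t < T.+1) (- gpay A v (p t))) | v in (ball2 d)].

Definition regret_p {n d : nat} (A : 'M[R]_(n, d)) (w : nat -> 'cV[R]_d)
  (p : nat -> 'cV[R]_n) (T : nat) : R :=
  \sum_(1 <= t < T.+1) gpay A (w t) (p t)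
  - inf [set (\sum_(1 <= t < T.+1) gpay A (w t) q) | q in (simplex n)].

End Defs.
Arguments ball2 {R} d _.
Arguments simplex {R} n _.

(* Main.v *)
Require Import Defs.
From mathcomp Require Import all_boot all_order all_algebra.
From mathcomp Require Import all_classical all_reals all_analysis.
From mathcomp Require Import lra ring.
Import Order.TTheory GRing.Theory Num.Theory.
Local Open Scope ring_scope.

Ltac sumify := do 4 rewrite ?mulr_sumr ?mulr_suml -?sumrN -?sumrB -?big_split /=.
Section S. Variable R : realType.
Definition Gf (y : R) := ln y - (3/2 - 27/2 * ((y+2)^-1)^+2).
Definition Ff (y : R) := y * ln y - y + 1 - 3/2 * (y - 4 + 9 * (y+2)^-1).

Lemma dG {x : R} : 0 < x -> is_derive x 1 Gf (x^-1 - 27 / (x+2)^+3).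
Proof.
move=> x0.
have x2 : x + 2 != 0 by rewrite gt_eqF // ltr_wpDr // ltW.
have hl := is_derive1_ln x0.
have h2 := is_deriveD (is_derive_id x (1:R)) (is_derive_cst (2:R) x 1).
have h3 := @is_deriveV R (id + cst 2) x _ _ x2 h2.
have h4 := is_deriveX 2 h3.
have h5 := is_deriveZ (27/2:R) h4.
have h6 := is_deriveB (@is_derive_cst _ _ _ (3/2 : R) x 1) h5.
have h7 := is_deriveB hl h6.
apply: is_derive_eq h7 _.
rewrite /= !addr0 expr1 sub0r. rewrite -![(_ : R) *: _]/(_ * _).
have e : (id + cst 2) x = x + 2 :> R by [].
rewrite e. field. by rewrite x2 gt_eqF.
Qed.

Lemma dF {x : R} : 0 < x -> is_derive x 1 Ff (Gf x).
Proof.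
move=> x0.
have x2 : x + 2 != 0 by rewrite gt_eqF // ltr_wpDr // ltW.
have hl := is_derive1_ln x0.
have h1 := is_deriveM (is_derive_id x (1:R)) hl.
have h2 := is_deriveD (is_derive_id x (1:R)) (is_derive_cst (2:R) x 1).
have h3 := @is_deriveV R (id + cst 2) x _ _ x2 h2.
have h4 := is_deriveZ (9:R) h3.
have h5 := is_deriveD (is_deriveB (is_derive_id x (1:R)) (is_derive_cst (4:R) x 1)) h4.
have h6 := is_deriveZ (3/2:R) h5.
have h7 := is_deriveB (is_deriveD (is_deriveB h1 (is_derive_id x (1:R))) (is_derive_cst (1:R) x 1)) h6.
apply: is_derive_eq h7 _.
rewrite /Gf /= !addr0 ?expr1 ?sub0r ?subr0. rewrite -![(_ : R) *: _]/(_ * _).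
have e : (id + cst 2) x = x + 2 :> R by [].
rewrite e. field. by rewrite x2 gt_eqF.
Qed.

Lemma G1 : Gf 1 = 0.
Proof. rewrite /Gf ln1. by field. Qed.
Lemma F1 : Ff 1 = 0.
Proof. rewrite /Ff ln1. by field. Qed.

Lemma dG_ge0 (y : R) : 0 < y -> 0 <= y^-1 - 27 / (y+2)^+3.
Proof.
move=> y0.
have y2 : 0 < y + 2 by rewrite ltr_wpDr // ltW.
have h : 27 * y <= (y+2)^+3.
  have : 0 <= (y-1)^+2 * (y+8) by rewrite mulr_ge0 ?sqr_ge0 // addr_ge0 // ltW.
  move=> H. rewrite -subr_ge0. apply: le_trans H _. rewrite le_eqVlt; apply/orP; left; apply/eqP; ring.
rewrite subr_ge0 ler_pdivrMr ?exprn_gt0 //. rewrite -(ler_pM2l y0) mulrA mulrV ?mul1r ?unitfE ?gt_eqF //.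
by rewrite mulrC.
Qed.

Lemma G_mono (x y : R) : 0 < x -> x <= y -> Gf x <= Gf y.
Proof.
move=> x0 xy.
have y0 : 0 < y by apply: lt_le_trans xy.
apply: (@ger0_derive1_le_cc _ Gf x y) => //.
- move=> z; rewrite in_itv /= => /andP[xz _]. 
  by case: (dG (lt_trans x0 xz)).
- move=> z; rewrite in_itv /= => /andP[xz _]. 
  rewrite derive1E. case: (dG (lt_trans x0 xz)) => _ ->. apply: dG_ge0. exact: lt_trans x0 xz.
- apply: derivable_within_continuous => z; rewrite in_itv /= => /andP[xz _].
  by case: (dG (lt_le_trans x0 xz)).
- by rewrite in_itv /= lexx xy.
- by rewrite in_itv /= lexx xy.
Qed.

Lemma F_ge0 {x : R} : 0 < x -> 0 <= Ff x.
Proof.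
move=> x0. rewrite -F1.
have [x1|x1] := leP x 1.
- apply: (@ler0_derive1_le_cc _ Ff x 1) => //.
  + move=> z; rewrite in_itv /= => /andP[xz _]. 
    by case: (dF (lt_trans x0 xz)).
  + move=> z; rewrite in_itv /= => /andP[xz z1]. 
    rewrite derive1E. case: (dF (lt_trans x0 xz)) => _ ->. rewrite -G1. apply: G_mono (ltW z1).
    exact: lt_trans x0 xz.
  + apply: derivable_within_continuous => z; rewrite in_itv /= => /andP[xz _].
    by case: (dF (lt_le_trans x0 xz)).
  + by rewrite in_itv /= lexx x1.
  + by rewrite in_itv /= lexx x1.
- apply: (@ger0_derive1_le_cc _ Ff 1 x) => //.
  + move=> z; rewrite in_itv /= => /andP[xz _]. 
    by case: (dF (lt_trans ltr01 xz)).
  + move=> z; rewrite in_itv /= => /andP[xz z1]. 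
    rewrite derive1E. case: (dF (lt_trans ltr01 xz)) => _ ->. rewrite -G1. apply: G_mono (ltW xz).
    exact: ltr01.
  + apply: derivable_within_continuous => z; rewrite in_itv /= => /andP[xz _].
    by case: (dF (lt_le_trans ltr01 xz)).
  + by rewrite in_itv /= lexx ltW.
  + by rewrite in_itv /= lexx ltW.
  + exact: ltW.
Qed.

Lemma scalar_ineq (p q : R) : 0 <= p -> 0 < q ->
  3/2 * (p - q)^+2 / (p + 2 * q) <= p * ln (p / q) - p + q.
Proof.
move=> p0 q0.
have pq : 0 < p + 2 * q by rewrite ltr_wpDl // mulr_gt0.
rewrite ler_pdivrMr //.
have [->|pp] := eqVneq p 0.
  rewrite !mul0r !sub0r add0r. rewrite sqrrN. 
  have : 0 <= q^+2 by rewrite sqr_ge0. nra.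
have p0' : 0 < p by rewrite lt_def pp p0.
have := F_ge0 (divr_gt0 p0' q0).
rewrite /Ff.
set L := ln (p / q).
move=> H.
have e : (p * L - p + q) * (p + 2 * q) - 3 / 2 * (p - q) ^+ 2 = q * (p + 2 * q) * (p / q * L - p / q + 1 - 3 / 2 * (p / q - 4 + 9 * (p / q + 2)^-1)).
  field. by rewrite !gt_eqF.
rewrite -subr_ge0 e. apply: mulr_ge0 => //. apply: mulr_ge0; exact: ltW.
Qed.

Definition l1d {n} (p q : 'cV[R]_n) := \sum_i `|p i 0 - q i 0|.

Lemma pinsker {n} (p q : 'cV[R]_n) : simplex n p -> simplex n q ->
  (forall i, 0 < q i 0) -> l1d p q ^+ 2 <= 2 * KL p q.
Proof.
move=> [p0 p1] [q0 q1] qpos.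
set t := fun i => 3/2 * (p i 0 - q i 0)^+2 / (p i 0 + 2 * q i 0).
have wpos : forall i, 0 < p i 0 + 2 * q i 0.
  by move=> i; rewrite ltr_wpDl // mulr_gt0.
have hK : KL p q = \sum_i (p i 0 * ln (p i 0 / q i 0) - p i 0 + q i 0).
  rewrite big_split /= big_split /= sumrN p1 q1 /KL. by rewrite subrK.
have hS : \sum_i t i <= KL p q.
  rewrite hK; apply: ler_sum => i _; exact: scalar_ineq.
have t0 : forall i, 0 <= t i.
  move=> i; rewrite /t; apply: divr_ge0; [apply: mulr_ge0 => //; exact: sqr_ge0 | exact: ltW].
have S0 : 0 <= \sum_i t i by apply: sumr_ge0 => i _.
set D := l1d p q.
have D0 : 0 <= D by apply: sumr_ge0 => i _.
have [D00|Dp] := eqVneq D 0.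
  by rewrite D00 expr0n /= mulr_ge0 // (le_trans S0 hS).
have Dpos : 0 < D by rewrite lt_def Dp D0.
have hw : \sum_i (p i 0 + 2 * q i 0) = 3.
  by rewrite big_split /= -mulr_sumr p1 q1; ring.
have hi : forall i, `|p i 0 - q i 0| <= t i / D + D * (p i 0 + 2 * q i 0) / 6.
  move=> i. rewrite -subr_ge0.
  set d := p i 0 - q i 0. set w := p i 0 + 2 * q i 0.
  have -> : t i / D + D * w / 6 - `|d| = (3 * `|d| - D * w)^+2 / (6 * D * w).
    rewrite /t -/d -/w -(real_normK (num_real d)). field.
    by rewrite !gt_eqF // wpos.
  apply: divr_ge0; first exact: sqr_ge0. apply: ltW; apply: mulr_gt0; [apply: mulr_gt0 =>// | exact: wpos].
have hsum : D <= (\sum_i t i) / D + D / 2.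
  apply: (le_trans (ler_sum _ (fun i _ => hi i))).
  rewrite big_split /= -mulr_suml -mulr_suml -mulr_sumr hw. 
  rewrite le_eqVlt; apply/orP; left; apply/eqP; field. by rewrite gt_eqF.
have : D ^+ 2 <= 2 * \sum_i t i.
  have h2 : D * D <= D * ((\sum_i t i) / D + D / 2) 
    by rewrite (ler_pM2l Dpos).
  have e : D * ((\sum_i t i) / D + D / 2) = \sum_i t i + D * D / 2.
    by field; rewrite gt_eqF.
  rewrite e in h2. rewrite expr2. lra.
move=> h; apply: (le_trans h); lra.
Qed.
End S.


Section S4. Variable R : realType.

Definition Nsq {d} (v : 'cV[R]_d) := \sum_i v i 0 ^+ 2.


Lemma Nsq_ge0 {d} (v : 'cV[R]_d) : 0 <= Nsq v.
Proof. by apply: sumr_ge0 => i _; exact: sqr_ge0. Qed.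

Lemma l2normE {d} (v : 'cV[R]_d) : l2norm v = Num.sqrt (Nsq v).
Proof. by rewrite /l2norm; congr Num.sqrt; apply: eq_bigr => i _; rewrite big_ord1. Qed.

Lemma l2normE2 {d} (v : 'cV[R]_d) : l2norm v ^+ 2 = Nsq v.
Proof. by rewrite l2normE sqr_sqrtr // Nsq_ge0. Qed.

Lemma ball2E {d} (v : 'cV[R]_d) : ball2 d v <-> Nsq v <= 1.
Proof. by rewrite /ball2 /= l2normE -{1}sqrtr1 ler_sqrt. Qed.

Lemma euclid_step {d} (a y x : 'cV[R]_d) (c : R) :
  is_argmin (ball2 d) (fun v => c * dotv a v + 2^-1 * l2norm (v - y) ^+ 2) x ->
  forall u, ball2 d u ->
  c * (dotv a x - dotv a u) <= 2^-1 * Nsq (u - y) - 2^-1 * Nsq (u - x) - 2^-1 * Nsq (x - y).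
Proof.
move=> [xb xmin] u ub.
move/ball2E: xb => xb; move/ball2E: ub => ub.
set B := c * (dotv a u - dotv a x) + \sum_i (x i 0 - y i 0) * (u i 0 - x i 0).
set K := Nsq (u - x).
have K0 : 0 <= K := Nsq_ge0 _.
have key : forall e, 0 < e -> e <= 1 -> 0 <= B + e * K / 2.
  move=> e e0 e1.
  set z := x + e *: (u - x).
  have zb : ball2 d z.
    apply/ball2E.
    have h1 : Nsq z <= (1 - e) * Nsq x + e * Nsq u.
      rewrite /Nsq; sumify; apply: ler_sum => i _; rewrite !mxE.
      have : 0 <= e * (1 - e) * (u i 0 - x i 0)^+2.
        by rewrite mulr_ge0 ?sqr_ge0 // mulr_ge0 ?subr_ge0 // ltW.
      move=> h. rewrite -subr_ge0. 
      have -> : (1 - e) * x i 0 ^+ 2 + e * u i 0 ^+ 2 - (x i 0 + e * (u i 0 - x i 0)) ^+ 2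
         = e * (1 - e) * (u i 0 - x i 0)^+2 by ring.
      exact: h.
    apply: (le_trans h1).
    have : (1 - e) * Nsq x <= (1 - e) * 1 by rewrite ler_wpM2l // subr_ge0.
    have : e * Nsq u <= e * 1 by rewrite ler_wpM2l // ltW.
    lra.
  have := xmin z zb.
  rewrite !l2normE2.
  have E : c * dotv a z + 2^-1 * Nsq (z - y) - (c * dotv a x + 2^-1 * Nsq (x - y))
           = e * (B + e * K / 2).
    rewrite /B /K /dotv /Nsq; sumify.
    by apply: eq_bigr => i _; rewrite !mxE; field.
  move=> h.
  have : 0 <= e * (B + e * K / 2) by rewrite -E subr_ge0.
  by rewrite pmulr_rge0.
have B0 : 0 <= B.
  rewrite leNgt; apply/negP => Bn.
  have KB : 0 < K - B by lra.
  set e := - B / (K - B).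
  have e0 : 0 < e by rewrite /e divr_gt0 // oppr_gt0.
  have e1 : e <= 1 by rewrite /e ler_pdivrMr // mul1r; lra.
  have := key e e0 e1.
  have E : (B + e * K / 2) * (K - B) = B * (K / 2 - B).
    by rewrite /e; field; rewrite gt_eqF.
  have : (B + e * K / 2) * (K - B) < 0.
    by rewrite E pmulr_llt0 //; lra.
  rewrite pmulr_llt0 //; lra.
have E2 : \sum_i (x i 0 - y i 0) * (u i 0 - x i 0) =
    2^-1 * Nsq (u - y) - 2^-1 * Nsq (u - x) - 2^-1 * Nsq (x - y).
  rewrite /Nsq; sumify. apply: eq_bigr => i _; rewrite !mxE; by field.
rewrite -E2. move: B0; rewrite /B. lra.
Qed.

End S4.


Arguments l1d {R n}. Arguments pinsker {R n p q}. Arguments Nsq {R d}.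
Section S5. Variable R : realType.

Lemma l1d_eq0 {n} (p q : 'cV[R]_n) : l1d p q = 0 -> p = q.
Proof.
move=> h; apply/matrixP => i j; rewrite (ord1 j).
have := @psumr_eq0P _ _ _ (fun i => `|p i 0 - q i 0|) (fun i _ => normr_ge0 _) h i isT.
by move/eqP; rewrite normr_eq0 subr_eq0 => /eqP.
Qed.

Lemma KL_ge0 {n} (p q : 'cV[R]_n) : simplex n p -> simplex n q ->
  (forall i, 0 < q i 0) -> 0 <= KL p q.
Proof.
move=> hp hq qp; have := pinsker hp hq qp.
have := sqr_ge0 (l1d p q). lra.
Qed.

Lemma kl_step {n} (a y x : 'cV[R]_n) (c : R) : simplex n y -> (forall i, 0 < y i 0) ->
  is_argmin (simplex n) (fun q => c * dotv a q + KL q y) x ->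
  (forall i, 0 < x i 0) /\
  forall u, simplex n u -> c * (dotv a x - dotv a u) = KL u y - KL u x - KL x y.
Proof.
move=> [y0 y1] ypos [xs xmin].
set z := fun i : 'I_n => y i 0 * expR (- (c * a i 0)).
have zpos : forall i, 0 < z i by move=> i; rewrite mulr_gt0 // expR_gt0.
set Z := \sum_i z i.
have [i0 _] : exists i0 : 'I_n, true.
  case: (pickP (fun _ : 'I_n => true)) => [i0 _|h]; first by exists i0.
  by move: y1; rewrite big_pred0 // => /eqP; rewrite eq_sym oner_eq0.
have Zpos : 0 < Z.
  rewrite /Z (bigD1 i0) //=; apply: ltr_wpDr; first by apply: sumr_ge0 => i _; exact: ltW.
  exact: zpos.
set xs' := \col_i (z i / Z).
have xs'pos : forall i, 0 < xs' i 0 by move=> i; rewrite mxE divr_gt0.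
have xs'S : simplex n xs'.
  split; first by move=> i; exact: ltW.
  rewrite (eq_bigr (fun i => z i / Z)); last by move=> i _; rewrite mxE.
  by rewrite -mulr_suml divff // gt_eqF.
have ident : forall q, simplex n q -> c * dotv a q + KL q y = KL q xs' - ln Z.
  move=> q [q0 q1].
  have -> : ln Z = \sum_i q i 0 * ln Z by rewrite -mulr_suml q1 mul1r.
  rewrite /dotv /KL; sumify; apply: eq_bigr => i _.
  have [->|qn] := eqVneq (q i 0) 0; first by rewrite !mul0r !mulr0 subrr addr0.
  have qi : 0 < q i 0 by rewrite lt_def qn q0.
  rewrite mxE !ln_div ?posrE ?divr_gt0 ?zpos //.
  rewrite /z lnM ?posrE ?expR_gt0 // expRK. ring.
have KLself : KL xs' xs' = 0.
  rewrite /KL big1 // => i _; rewrite divff ?ln1 ?mulr0 // gt_eqF //.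
have xeq : x = xs'.
  apply: l1d_eq0.
  have h1 := xmin xs' xs'S.
  rewrite ident // ident // KLself in h1.
  have h2 : KL x xs' <= 0 by lra.
  have := pinsker xs xs'S xs'pos.
  have := sqr_ge0 (l1d x xs').
  move=> h3 h4.
  have : l1d x xs' ^+ 2 = 0 by lra.
  by move/eqP; rewrite sqrf_eq0 => /eqP.
split; first by rewrite xeq.
move=> u uS.
have hu := ident u uS.
have hx := ident x xs.
rewrite -xeq in hu hx KLself. rewrite KLself in hx.
lra.
Qed.

End S5.


Arguments l1d {R n}. Arguments pinsker {R n p q}. Arguments Nsq {R d}.
Arguments l1d_eq0 {R n p q}.
Section S6. Variable R : realType.

Lemma gpay_dotT {n d} (A : 'M[R]_(n,d)) (q : 'cV_n) (v : 'cV_d) :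
  dotv (- (A^T *m q)) v = - gpay A v q.
Proof.
rewrite /gpay /dotv.
rewrite (eq_bigr (fun j => - \sum_i q i 0 * A i j * v j 0)); last first.
  move=> j _; rewrite !mxE mulNr mulr_suml; congr (- _); apply: eq_bigr => i _.
  by rewrite !mxE; ring.
rewrite sumrN exchange_big /=; congr (- _); apply: eq_bigr => i _.
rewrite mxE mulr_sumr; apply: eq_bigr => j _; ring.
Qed.

Lemma gpay_dotA {n d} (A : 'M[R]_(n,d)) (q : 'cV_n) (v : 'cV_d) :
  dotv (A *m v) q = gpay A v q.
Proof. by rewrite /gpay /dotv; apply: eq_bigr => i _; rewrite mulrC. Qed.

Lemma gpay_cross {n d} (A : 'M[R]_(n,d)) (P Q : 'cV_n) (v1 v2 : 'cV_d) :
  \sum_i (P i 0 - Q i 0) * (A *m (v1 - v2)) i 0 =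
  gpay A v1 P - gpay A v2 P - gpay A v1 Q + gpay A v2 Q.
Proof.
rewrite mulmxBr /gpay /dotv; sumify; apply: eq_bigr => i _; rewrite !mxE; ring.
Qed.

Lemma row_bound {n d} (A : 'M[R]_(n,d)) (v : 'cV_d) (i : 'I_n) (l : R) :
  0 < l -> \sum_j A i j ^+ 2 <= 1 -> `|(A *m v) i 0| <= (l + Nsq v / l) / 2.
Proof.
move=> l0 hA; rewrite mxE.
apply: (le_trans (ler_norm_sum _ _ _)).
have h : forall j, `|A i j * v j 0| <= (l * A i j ^+ 2 + v j 0 ^+ 2 / l) / 2.
  move=> j; rewrite -subr_ge0 normrM.
  have -> : (l * A i j ^+ 2 + v j 0 ^+ 2 / l) / 2 - `|A i j| * `|v j 0| =
     (l * `|A i j| - `|v j 0|)^+2 / (2 * l).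
    rewrite -(real_normK (num_real (A i j))) -(real_normK (num_real (v j 0))).
    by field; rewrite gt_eqF.
  by apply: divr_ge0; [exact: sqr_ge0 | rewrite ltW // mulr_gt0].
apply: (le_trans (ler_sum _ (fun j _ => h j))).
rewrite /Nsq -mulr_suml big_split /= -mulr_sumr -mulr_suml.
rewrite ler_pM2r //. rewrite lerD2r. by rewrite -{2}(mulr1 l) ler_pM2l.
Qed.

Lemma cross_bound {n d} (A : 'M[R]_(n,d)) (P Q : 'cV_n) (v : 'cV_d) (s : R) :
  0 < s -> (forall i, \sum_j A i j ^+ 2 <= 1) ->
  `|\sum_i (P i 0 - Q i 0) * (A *m v) i 0| <= s / 2 * Nsq v + l1d P Q ^+ 2 / (2 * s).
Proof.
move=> s0 hA.
have RHS0 : 0 <= s / 2 * Nsq v + l1d P Q ^+ 2 / (2 * s).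
  apply: addr_ge0; first by rewrite mulr_ge0 ?Nsq_ge0 // divr_ge0 // ltW.
  by rewrite divr_ge0 ?sqr_ge0 // ltW // mulr_gt0.
set c := l1d P Q.
have c0 : 0 <= c by apply: sumr_ge0 => i _.
have [c00|cn] := eqVneq c 0.
  have PQ := l1d_eq0 c00. rewrite PQ.
  rewrite big1 ?normr0 // => i _; by rewrite subrr mul0r.
have cp : 0 < c by rewrite lt_def cn c0.
set l := c / s.
have l0 : 0 < l by rewrite divr_gt0.
apply: (le_trans (ler_norm_sum _ _ _)).
have h : forall i, `|(P i 0 - Q i 0) * (A *m v) i 0| <= `|P i 0 - Q i 0| * ((l + Nsq v / l) / 2).
  by move=> i; rewrite normrM ler_wpM2l // row_bound.
apply: (le_trans (ler_sum _ (fun i _ => h i))).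
rewrite -mulr_suml -/c /l. rewrite le_eqVlt; apply/orP; left; apply/eqP.
change (\sum_(i < n) `|P i 0 - Q i 0|) with c. by field; rewrite !gt_eqF.
Qed.

Lemma rowA_bound {n d} (A : 'M[R]_(n,d)) (i : 'I_n) :
  l2norm (row i A) <= 1 -> \sum_j A i j ^+ 2 <= 1.
Proof.
rewrite /l2norm big_ord1 -{1}sqrtr1 ler_sqrt //.
by rewrite (eq_bigr (fun j => A i j ^+ 2)) // => j _; rewrite mxE.
Qed.

Lemma KL_unif {n} (q : 'cV[R]_n) : (0 < n)%N -> simplex n q ->
  KL q (const_mx n%:R^-1) <= ln n%:R.
Proof.
move=> n0 [q0 q1].
have npos : 0 < n%:R :> R by rewrite ltr0n.
have qle1 : forall i, q i 0 <= 1.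
  move=> i; rewrite -q1 (bigD1 i) //= ler_wpDr //; by apply: sumr_ge0 => j _.
have -> : ln n%:R = \sum_i q i 0 * ln (n%:R : R) by rewrite -mulr_suml q1 mul1r.
rewrite /KL; apply: ler_sum => i _.
rewrite mxE invrK.
have [->|qn] := eqVneq (q i 0) 0; first by rewrite !mul0r.
have qi : 0 < q i 0 by rewrite lt_def qn q0.
rewrite lnM ?posrE // mulrDr.
have : q i 0 * ln (q i 0) <= 0 by rewrite mulr_ge0_le0 // ?ln_le0 // ltW.
lra.
Qed.

End S6.


Section S7. Variable R : realType.
Lemma combine (s si G1 G2 G3 G4 G5 G6 G7 G8 G9 Na Nb Nc Nu Nu' K1 K2 K3 K4 K5 X Y : R) :
 0 < s -> s * si = 1 ->
 si * (G2 - G1) <= 2^-1 * Na - 2^-1 * Nb - 2^-1 * Nc ->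
 si * (G4 - G3) <= 2^-1 * Nu - 2^-1 * Nu' - 2^-1 * Na ->
 s * (G5 - G6) = K1 - K2 - K3 ->
 s * (G7 - G8) = K4 - K5 - K1 ->
 X = G3 - G9 - G2 + G1 -> X <= s / 2 * Nb + si * K3 ->
 Y = G9 - G5 - G7 + G6 -> Y <= s / 2 * Nc + si * K2 ->
 G4 - G8 <= s / 2 * (Nu - Nu') + si * (K4 - K5).
Proof.
move=> s0 ssi h1 h2 h3 h4 hX hX' hY hY'.
have e1 : G2 - G1 <= s * (2^-1 * Na - 2^-1 * Nb - 2^-1 * Nc).
  by move: h1; rewrite -(ler_pM2l s0) mulrA ssi mul1r.
have e2 : G4 - G3 <= s * (2^-1 * Nu - 2^-1 * Nu' - 2^-1 * Na).
  by move: h2; rewrite -(ler_pM2l s0) mulrA ssi mul1r.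
have e3 : G5 - G6 = si * (K1 - K2 - K3) by rewrite -h3 mulrA [si * s]mulrC ssi mul1r.
have e4 : G7 - G8 = si * (K4 - K5 - K1) by rewrite -h4 mulrA [si * s]mulrC ssi mul1r.
lra.
Qed.
End S7.

Arguments l1d {R n}. Arguments pinsker {R n p q}. Arguments Nsq {R d}.
Arguments l1d_eq0 {R n p q}.
Arguments kl_step {R n a y x c}. Arguments euclid_step {R d a y x c}.
Arguments gpay_cross {R n d}. Arguments gpay_dotT {R n d}. Arguments gpay_dotA {R n d}.
Arguments cross_bound {R n d A}. Arguments KL_ge0 {R n p q}. Arguments KL_unif {R n}.
Arguments rowA_bound {R n d A i}. Arguments Nsq_ge0 {R d}. Arguments ball2E {R d}.
Arguments combine {R} [s si G1 G2 G3 G4 G5 G6 G7 G8 G9 Na Nb Nc Nu Nu' K1 K2 K3 K4 K5 X Y].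

Lemma l1dC (R : realType) n (p q : 'cV[R]_n) : l1d p q = l1d q p.
Proof. by apply: eq_bigr => i _; rewrite distrC. Qed.

Theorem proposition3 (R : realType) :
  exists C : R, forall (n d : nat) (A : 'M[R]_(n, d))
    (w wh : nat -> 'cV[R]_d) (p ph : nat -> 'cV[R]_n),
    (2 <= n)%N ->
    (forall i : 'I_n, l2norm (row i A) <= 1) ->
    wh 0%N = 0 ->
    ph 0%N = const_mx (n%:R^-1) ->
    (forall t : nat,
       is_argmin (ball2 d)
         (fun v => (Num.sqrt (ln n%:R))^-1 * dotv (- (A^T *m ph t)) v
                   + 2^-1 * l2norm (v - wh t) ^+ 2) (w t.+1)) ->
    (forall t : nat,
       is_argmin (simplex n)
         (fun q => Num.sqrt (ln n%:R) * dotv (A *m wh t) q + KL q (ph t))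
         (p t.+1)) ->
    (forall t : nat,
       is_argmin (ball2 d)
         (fun v => (Num.sqrt (ln n%:R))^-1 * dotv (- (A^T *m p t.+1)) v
                   + 2^-1 * l2norm (v - wh t) ^+ 2) (wh t.+1)) ->
    (forall t : nat,
       is_argmin (simplex n)
         (fun q => Num.sqrt (ln n%:R) * dotv (A *m w t.+1) q + KL q (ph t))
         (ph t.+1)) ->
    forall T : nat,
      regret_p A w p T + regret_w A w p T <= C * Num.sqrt (ln n%:R).
Proof.
exists 2 => n d A w wh p ph n2 hA wh0 ph0 hw hp hwh hph T.
set s := Num.sqrt (ln n%:R).
have n1 : 1 < n%:R :> R by rewrite ltr1n.
have ln0 : 0 < ln (n%:R : R) by apply: ln_gt0.
have s0 : 0 < s by rewrite sqrtr_gt0.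
have ss : s * s = ln n%:R by rewrite -expr2 sqr_sqrtr // ltW.
have ssi : s * s^-1 = 1 by rewrite divff // gt_eqF.
have hA' : forall i, \sum_j A i j ^+ 2 <= 1 by move=> i; apply: rowA_bound.
have n0 : (0 < n)%N by apply: leq_trans n2.
have npos : 0 < n%:R :> R by rewrite ltr0n.
have ph0S : simplex n (ph 0%N) /\ (forall i, 0 < ph 0%N i 0).
  rewrite ph0; split; first split.
  - by move=> i; rewrite mxE invr_ge0 ltW.
  - rewrite (eq_bigr (fun _ => n%:R^-1)); last by move=> i _; rewrite mxE.
    rewrite sumr_const card_ord.
    have -> : n%:R^-1 *+ n = n%:R^-1 * n%:R :> R by rewrite mulr_natr.
    by rewrite mulVf // gt_eqF.
  - by move=> i; rewrite mxE invr_gt0.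
have phS : forall t, simplex n (ph t) /\ (forall i, 0 < ph t i 0).
  elim => [|t [IHs IHp]]; first exact: ph0S.
  have [pos _] := kl_step IHs IHp (hph t).
  by split; [exact: (hph t).1 | exact: pos].
have pS : forall t, simplex n (p t.+1) /\ (forall i, 0 < p t.+1 i 0).
  move=> t; have [IHs IHp] := phS t.
  have [pos _] := kl_step IHs IHp (hp t).
  by split; [exact: (hp t).1 | exact: pos].
have step : forall u q t, ball2 d u -> simplex n q ->
   gpay A u (p t.+1) - gpay A (w t.+1) q <=
   s / 2 * (Nsq (u - wh t) - Nsq (u - wh t.+1)) + s^-1 * (KL q (ph t) - KL q (ph t.+1)).
  move=> u q t ub qS.
  have [phs php] := phS t.
  have [phs' php'] := phS t.+1.
  have [ps pp] := pS t.
  have h1 := euclid_step (hw t) _ (hwh t).1.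
  have h2 := euclid_step (hwh t) _ ub.
  have h3 := (kl_step phs php (hp t)).2 _ phs'.
  have h4 := (kl_step phs php (hph t)).2 _ qS.
  rewrite !gpay_dotT in h1 h2. rewrite !gpay_dotA in h3 h4.
  have hX := gpay_cross A (p t.+1) (ph t) (wh t.+1) (w t.+1).
  have hX1 := cross_bound (p t.+1) (ph t) (wh t.+1 - w t.+1) s s0 hA'.
  have hX2 := pinsker ps phs php.
  have hY := gpay_cross A (p t.+1) (ph t.+1) (w t.+1) (wh t).
  have hY1 := cross_bound (p t.+1) (ph t.+1) (w t.+1 - wh t) s s0 hA'.
  have hY2 := pinsker phs' ps pp.
  rewrite l1dC in hY1.
  set X := \sum_i _ in hX hX1. set Y := \sum_i _ in hY hY1.
  have hX' : X <= s / 2 * Nsq (wh t.+1 - w t.+1) + s^-1 * KL (p t.+1) (ph t).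
    apply: le_trans (ler_norm X) _. apply: le_trans hX1 _. rewrite lerD2l.
    rewrite ler_pdivrMr ?mulr_gt0 //.
    have -> : s^-1 * KL (p t.+1) (ph t) * (2 * s) = 2 * KL (p t.+1) (ph t) by field; rewrite gt_eqF.
    exact: hX2.
  have hY' : Y <= s / 2 * Nsq (w t.+1 - wh t) + s^-1 * KL (ph t.+1) (p t.+1).
    apply: le_trans (ler_norm Y) _. apply: le_trans hY1 _. rewrite lerD2l.
    rewrite ler_pdivrMr ?mulr_gt0 //.
    have -> : s^-1 * KL (ph t.+1) (p t.+1) * (2 * s) = 2 * KL (ph t.+1) (p t.+1) by field; rewrite gt_eqF.
    exact: hY2.
  rewrite opprK [- _ + _]addrC in h1. rewrite opprK [- _ + _]addrC in h2.
  exact: (combine s0 ssi h1 h2 h3 h4 hX hX' hY hY').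
have tele : forall u q, ball2 d u -> simplex n q -> forall T,
   \sum_(1 <= t < T.+1) (gpay A u (p t) - gpay A (w t) q) <=
   s / 2 * (Nsq (u - wh 0%N) - Nsq (u - wh T)) + s^-1 * (KL q (ph 0%N) - KL q (ph T)).
  move=> u q ub qS; elim => [|T' IH].
    by rewrite big_geq // !subrr !mulr0 addr0.
  rewrite big_nat_recr //=.
  have := step u q T' ub qS. lra.
have bound : forall u q, ball2 d u -> simplex n q ->
   \sum_(1 <= t < T.+1) (gpay A u (p t) - gpay A (w t) q) <= 3 / 2 * s.
  move=> u q ub qS.
  apply: le_trans (tele u q ub qS T) _.
  rewrite wh0 subr0.
  have h1 : Nsq u <= 1 by apply/ball2E.
  have h2 := Nsq_ge0 (u - wh T).
  have [phTs phTp] := phS T.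
  have h3 := KL_ge0 qS phTs phTp.
  have h4 : KL q (ph 0%N) <= ln n%:R by rewrite ph0; apply: KL_unif.
  have h5 : s^-1 * (KL q (ph 0%N) - KL q (ph T)) <= s.
    rewrite mulrC ler_pdivrMr // ss. lra.
  have h6 : s / 2 * (Nsq u - Nsq (u - wh T)) <= s / 2.
    rewrite -[X in _ <= X]mulr1 ler_pM2l ?divr_gt0 //. lra.
  lra.
rewrite /regret_p /regret_w.
set Sw := fun v => \sum_(1 <= t < T.+1) - gpay A v (p t).
set Sp := fun q => \sum_(1 <= t < T.+1) gpay A (w t) q.
have key : forall u q, ball2 d u -> simplex n q -> - Sw u - Sp q <= 3 / 2 * s.
  move=> u q ub qS. have := bound u q ub qS.
  by rewrite sumrB /Sw /Sp sumrN opprK.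
have ball0 : ball2 d (0 : 'cV[R]_d).
  apply/ball2E; rewrite /Nsq big1 // => i _; by rewrite mxE expr0n.
have hW : forall q, simplex n q -> - 3 / 2 * s - Sp q <= inf [set Sw v | v in ball2 d].
  move=> q qS; apply: lb_le_inf.
    by exists (Sw 0); exists 0.
  move=> y [v vb <-]. have := key v q vb qS. lra.
have hP : - 3 / 2 * s - inf [set Sw v | v in ball2 d] <= inf [set Sp q | q in simplex n].
  apply: lb_le_inf.
    by exists (Sp (ph 0%N)); exists (ph 0%N) => //; exact: (phS 0%N).1.
  move=> y [q qS <-]. have := hW q qS. lra.
have hsum : \sum_(1 <= t < T.+1) gpay A (w t) (p t) + \sum_(1 <= t < T.+1) - gpay A (w t) (p t) = 0.
  by rewrite sumrN subrr.
rewrite -/(Sw _) -/(Sp _).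
lra.
Qed.
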